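(* Let $E$ be a $K$-contact Lie algebroid with structure $(F_E,\xi,\eta,g_E)$, fundamental form $\Omega_E$, and Levi-Civita connection $\nabla$ of $g_E$. Then for all $s,s_1,s_2\in\Gamma(E)$: $$(\nabla_{s_1}\eta)s_2=g_E(\nabla_{s_1}\xi,s_2)=\Omega_E(s_1,s_2),\qquad (\nabla_sF_E)\xi=-s+\eta(s)\xi.$$
   Context: A Lie algebroid $(E,\rho_E,[\cdot,\cdot]_E)$ over $M$ is a vector bundle with anchor $\rho_E:E\to TM$ and Lie bracket on $\Gamma(E)$ with $[s_1,fs_2]_E=f[s_1,s_2]_E+\rho_E(s_1)(f)s_2$. For a 1-form $\eta$, $(d_E\eta)(s_1,s_2)=\frac12\{\rho_E(s_1)(\eta(s_2))-\rho_E(s_2)(\eta(s_1))-\eta([s_1,s_2]_E)\}$. For $E$ of rank $2m+1$, an almost contact Riemannian structure $(F_E,\xi,\eta,g_E)$: endomorphism $F_E$, $\xi\in\Gamma(E)$, $\eta\in\Gamma(E^* )$, bundle metric $g_E$ with $F_E^2=-I_E+\eta\otimes\xi$, $\eta(\xi)=1$, $g_E(F_Es_1,F_Es_2)=g_E(s_1,s_2)-\eta(s_1)\eta(s_2)$; fundamental form $\Omega_E(s_1,s_2)=g_E(s_1,F_Es_2)$. $E$ is contact Riemannian if also $\eta\wedge(d_E\eta)^m$ vanishes nowhere and $d_E\eta=\Omega_E$; it is $K$-contact if moreover $\xi$ is Killing: $\rho_E(\xi)(g_E(s_1,s_2))-g_E([\xi,s_1]_E,s_2)-g_E(s_1,[\xi,s_2]_E)=0$.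 The Levi-Civita connection $\nabla$ is the unique torsion-free metric $E$-connection ($\nabla_{s_1}s_2-\nabla_{s_2}s_1=[s_1,s_2]_E$, $\rho_E(s)(g_E(s_1,s_2))=g_E(\nabla_ss_1,s_2)+g_E(s_1,\nabla_ss_2)$); $(\nabla_{s_1}\eta)(s_2)=\rho_E(s_1)(\eta(s_2))-\eta(\nabla_{s_1}s_2)$ and $(\nabla_sF_E)s'=\nabla_s(F_Es')-F_E(\nabla_ss')$. *)

(* Defs.v *)
(* Algebraic (Lie--Rinehart) model of a Lie algebroid:
   A  = the commutative R-algebra of functions C^oo(M),
   S  = the A-module of sections Gamma(E). *)
From HB Require Import structures.
From mathcomp Require Import all_boot all_order all_algebra.
Set Implicit Arguments. Unset Strict Implicit. Unset Printing Implicit Defensive.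
Import Order.TTheory GRing.Theory Num.Theory.
Local Open Scope ring_scope.

Section LieAlgebroid.
Variables (R : realFieldType) (A : comAlgType R) (S : lmodType A).

(* the function algebra has no nonzero nilpotents of order 2 (true for C^oo(M)) *)
Definition reduced_alg : Prop := forall a : A, a * a = 0 -> a = 0.

Definition is_lie_algebroid (anchor : S -> A -> A) (br : S -> S -> S) : Prop :=
      (forall (f : A) (s t : S) (a : A),
          anchor (f *: s + t) a = f * anchor s a + anchor t a) /\
      (forall (s : S) (r : R) (a b : A),
          anchor s (r%:A * a + b) = r%:A * anchor s a + anchor s b) /\
      (forall (s : S) (a b : A),
          anchor s (a * b) = anchor s a * b + a * anchor s b) /\
      (forall (r : R) (s1 s2 t : S),
          br (r%:A *: s1 + s2) t = r%:A *: br s1 t + br s2 t) /\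
      (forall s t : S, br s t = - br t s) /\
      (forall s1 s2 s3 : S,
          br s1 (br s2 s3) + br s2 (br s3 s1) + br s3 (br s1 s2) = 0) /\
      (forall (s1 s2 : S) (f : A),
          br s1 (f *: s2) = f *: br s1 s2 + anchor s1 f *: s2) /\
      (forall (s t : S) (a : A),
          anchor (br s t) a = anchor s (anchor t a) - anchor t (anchor s a)).

(* exterior derivative of a 1-form, with the paper's 1/2 convention *)
Definition dE (anchor : S -> A -> A) (br : S -> S -> S) (eta : S -> A)
    (s1 s2 : S) : A :=
  (2^-1 : R)%:A * (anchor s1 (eta s2) - anchor s2 (eta s1) - eta (br s1 s2)).

Definition is_bundle_metric (g : S -> S -> A) : Prop :=
  [/\ (forall s t : S, g s t = g t s),
      (forall (f : A) (s1 s2 t : S), g (f *: s1 + s2) t = f * g s1 t + g s2 t) &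
      (forall s : S, (forall t : S, g s t = 0) -> s = 0)].

Definition is_almost_contact_riemannian (F : S -> S) (xi : S) (eta : S -> A)
    (g : S -> S -> A) : Prop :=
  (forall (f : A) (s t : S), F (f *: s + t) = f *: F s + F t) /\
      (forall (f : A) (s t : S), eta (f *: s + t) = f * eta s + eta t) /\
      is_bundle_metric g /\
      (forall s : S, F (F s) = - s + eta s *: xi) /\
      eta xi = 1 /\
      (forall s1 s2 : S, g (F s1) (F s2) = g s1 s2 - eta s1 * eta s2).

Definition OmegaE (F : S -> S) (g : S -> S -> A) (s1 s2 : S) : A := g s1 (F s2).

(* K-contact: contact (d_E eta = Omega_E) and xi Killing. *)
Definition is_K_contact (anchor : S -> A -> A) (br : S -> S -> S)
    (F : S -> S) (xi : S) (eta : S -> A) (g : S -> S -> A) : Prop :=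
  [/\ is_almost_contact_riemannian F xi eta g,
      (forall s1 s2 : S, dE anchor br eta s1 s2 = OmegaE F g s1 s2) &
      (forall s1 s2 : S,
          anchor xi (g s1 s2) - g (br xi s1) s2 - g s1 (br xi s2) = 0)].

Definition is_levi_civita (anchor : S -> A -> A) (br : S -> S -> S)
    (g : S -> S -> A) (nabla : S -> S -> S) : Prop :=
  [/\ (forall (f : A) (s1 s2 t : S),
          nabla (f *: s1 + s2) t = f *: nabla s1 t + nabla s2 t),
      (forall (s t1 t2 : S), nabla s (t1 + t2) = nabla s t1 + nabla s t2),
      (forall (s t : S) (f : A),
          nabla s (f *: t) = f *: nabla s t + anchor s f *: t),
      (forall s1 s2 : S, nabla s1 s2 - nabla s2 s1 = br s1 s2) &
      (forall s s1 s2 : S,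
          anchor s (g s1 s2) = g (nabla s s1) s2 + g s1 (nabla s s2))].

Definition nabla_eta (anchor : S -> A -> A) (nabla : S -> S -> S)
    (eta : S -> A) (s1 s2 : S) : A :=
  anchor s1 (eta s2) - eta (nabla s1 s2).

Definition nabla_F (nabla : S -> S -> S) (F : S -> S) (s s' : S) : S :=
  nabla s (F s') - F (nabla s s').

End LieAlgebroid.

(* Main.v *)
Require Import Defs.
From HB Require Import structures.
From mathcomp Require Import all_boot all_order all_algebra.
From mathcomp Require Import ring.
Set Implicit Arguments. Unset Strict Implicit.
Import Order.TTheory GRing.Theory Num.Theory.
Local Open Scope ring_scope.

Lemma add_0 (U V : zmodType) (f : U -> V) :
  (forall x y, f (x + y) = f x + f y) -> f 0 = 0.
Proof. by move=> h; apply: (addrI (f 0)); rewrite -h !addr0. Qed.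

Lemma add_N (U V : zmodType) (f : U -> V) :
  (forall x y, f (x + y) = f x + f y) -> forall x, f (- x) = - f x.
Proof.
move=> h x; apply: (addrI (f x)); by rewrite -h !subrr (add_0 h).
Qed.

Lemma add_B (U V : zmodType) (f : U -> V) :
  (forall x y, f (x + y) = f x + f y) -> forall x y, f (x - y) = f x - f y.
Proof. by move=> h x y; rewrite h (add_N h). Qed.

Theorem proposition4p7 (R : realFieldType) (A : comAlgType R) (S : lmodType A)
    (anchor : S -> A -> A) (br : S -> S -> S)
    (F : S -> S) (xi : S) (eta : S -> A) (g : S -> S -> A)
    (nabla : S -> S -> S) :
  reduced_alg A ->
  is_lie_algebroid anchor br ->
  is_K_contact anchor br F xi eta g ->
  is_levi_civita anchor br g nabla ->
  forall s s1 s2 : S,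
    [/\ nabla_eta anchor nabla eta s1 s2 = g (nabla s1 xi) s2,
        g (nabla s1 xi) s2 = OmegaE F g s1 s2 &
        nabla_F nabla F s xi = - s + eta s *: xi].
Proof.
move=> red _ [[Flin [etalin [[gsym glin gnd] [FF [etaxi gFF]]]]] dEO kill]
  [nlin nadd nleib ntor nmet] s s1 s2.
have etaD : forall x y, eta (x + y) = eta x + eta y.
  by move=> x y; have := etalin 1 x y; rewrite scale1r mul1r.
have FD : forall x y, F (x + y) = F x + F y.
  by move=> x y; have := Flin 1 x y; rewrite !scale1r.
have gD1 : forall t x y, g (x + y) t = g x t + g y t.
  by move=> t x y; have := glin 1 x y t; rewrite scale1r mul1r.
have gD2 : forall t x y, g t (x + y) = g t x + g t y.
  by move=> t x y; rewrite gsym gD1 gsym [g y t]gsym.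
have g01 : forall t, g 0 t = 0 by move=> t; exact: (add_0 (gD1 t)).
have g02 : forall t, g t 0 = 0 by move=> t; exact: (add_0 (gD2 t)).
have gZ1 : forall f x t, g (f *: x) t = f * g x t.
  by move=> f x t; have := glin f x 0 t; rewrite addr0 g01 addr0.
have gZ2 : forall f x t, g t (f *: x) = f * g t x.
  by move=> f x t; rewrite gsym gZ1 gsym.
have eta0 : eta 0 = 0 := add_0 etaD.
have F0 : F 0 = 0 := add_0 FD.
have etaZ : forall f x, eta (f *: x) = f * eta x.
  by move=> f x; have := etalin f x 0; rewrite addr0 eta0 addr0.
have FZ : forall f x, F (f *: x) = f *: F x.
  by move=> f x; have := Flin f x 0; rewrite addr0 F0 addr0.
have h1 : forall x, eta (F x) *: xi = eta x *: F xi.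
  move=> x; apply: (addrI (- F x)).
  have := congr1 F (FF x); rewrite [F (F (F x))]FF FD (add_N FD) FZ => ->.
  done.
have Fxi0 : F xi = 0.
  have e1 := h1 xi; rewrite etaxi scale1r in e1.
  have e2 : eta (F xi) *: F xi = 0.
    by rewrite -FZ e1 FF etaxi scale1r addNr.
  have e3 : eta (F xi) * eta (F xi) = 0.
    have := congr1 eta e2; rewrite -{1}e1 !etaZ etaxi mulr1 eta0; done.
  by rewrite -e1 (red _ e3) scale0r.
have etaF0 : forall x, eta (F x) = 0.
  move=> x; have := congr1 eta (h1 x); rewrite Fxi0 scaler0 eta0 etaZ etaxi.
  by rewrite mulr1.
have gxi : forall x, g x xi = eta x.
  move=> x; have := gFF x xi; rewrite Fxi0 g02 etaxi mulr1.
  by move/eqP; rewrite eq_sym subr_eq0 => /eqP.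
have P : forall x y, anchor x (eta y) - eta (nabla x y) = g (nabla x xi) y.
  move=> x y; rewrite -!gxi [g y xi]gsym [g (nabla x y) xi]gsym nmet.
  by rewrite addrK.
have Kill : forall x y, g (nabla x xi) y + g x (nabla y xi) = 0.
  move=> x y; have := kill x y; rewrite nmet -!ntor.
  rewrite (add_B (gD1 y)) (add_B (gD2 x)) => <-; ring.
have part2 : forall x y, g (nabla x xi) y = OmegaE F g x y.
  move=> x y; rewrite -dEO /dE -ntor (add_B etaD).
  have -> : anchor x (eta y) - anchor y (eta x) - (eta (nabla x y) - eta (nabla y x))
     = (anchor x (eta y) - eta (nabla x y)) - (anchor y (eta x) - eta (nabla y x)) by ring.
  rewrite !P [g (nabla y xi) x]gsym.
  have -> : g (nabla x xi) y - g x (nabla y xi) = g (nabla x xi) y *+ 2.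
    by rewrite -[RHS]subr0 -(Kill x y); ring.
  rewrite mulr_algl -scaler_nat scalerA mulVf ?scale1r //.
  by rewrite pnatr_eq0.
have skew : forall x y, g x (F y) = - g (F x) y.
  move=> x y; have := gFF x (F y); rewrite etaF0 mulr0 subr0 => <-.
  by rewrite FF gD2 gZ2 (add_N (gD2 _)) gxi etaF0 mulr0 addr0.
split => //; first by rewrite /nabla_eta P.
have nxi : nabla s xi = - F s.
  apply/eqP; rewrite -addr_eq0; apply/eqP; apply: gnd => t.
  by rewrite gD1 part2 /OmegaE skew addNr.
by rewrite /nabla_F Fxi0 (add_0 (nadd s)) nxi (add_N FD) FF sub0r opprK.
Qed.
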